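(* Let $A\in\mathbb{C}^{n\times n}$, $B\in\mathbb{C}^{n\times m}$, $C\in\mathbb{C}^{p\times n}$, $D\in\mathbb{C}^{p\times m}$ and $F\in\mathbb{C}^{\nu\times\nu}$, and suppose $\mathrm{eig}(A)\cap\mathrm{eig}(F)=\emptyset$. The following statements are equivalent: (i) $\mathcal{R}_\Sigma(\lambda)$ has full column rank $n+m$ for all $\lambda\in\mathrm{eig}(F)$; (ii) for every pair $(P,Q)\in\mathbb{C}^{n\times\nu}\times\mathbb{C}^{p\times\nu}$ for which the system $$\Pi F = A\Pi + B\Psi + P,\qquad 0 = C\Pi + D\Psi + Q$$ admits a solution $(\Pi,\Psi)\in\mathbb{C}^{n\times\nu}\times\mathbb{C}^{m\times\nu}$, this solution is unique; (iii) for every pair $(\bar P,\bar Q)\in\mathbb{C}^{\nu\times n}\times\mathbb{C}^{\nu\times m}$, the system $$MA = FM + GC + \bar P,\qquad 0 = -MB + GD + \bar Q$$ admits a solution $(M,G)\in\mathbb{C}^{\nu\times n}\times\mathbb{C}^{\nu\times p}$; (iv) $\mathcal{C}_{\rm p}:\mathbb{C}^{m\times\nu}\to\mathbb{C}^{p\times\nu}$ is injective; (v) $\mathcal{C}_{\rm d}:\mathbb{C}^{\nu\times p}\to\mathbb{C}^{\nu\times m}$ is surjective. Moreover, for any $H\in\mathbb{C}^{m\times\nu}$: (a) if $(F,H)$ is observable and (i) holds, then $(F,\mathcal{C}_{\rm p}(H))$ is observable; (b) if $(F,H)$ is detectable and $\mathcal{R}_\Sigma(\lambda)$ has full column rank for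 all $\lambda\in\mathrm{eig}(F)\cap\mathbb{C}_{\geq 0}$, then $(F,\mathcal{C}_{\rm p}(H))$ is detectable. Furthermore, the converse of (a) holds provided $H\ker(\lambda I_\nu-F)=\mathbb{C}^m$ for all $\lambda\in\mathrm{eig}(F)$, and the converse of (b) holds provided $H\ker(\lambda I_\nu-F)=\mathbb{C}^m$ for all $\lambda\in\mathrm{eig}(F)\cap\mathbb{C}_{\geq 0}$.
   Context: Data: $A\in\mathbb{C}^{n\times n}$, $B\in\mathbb{C}^{n\times m}$, $C\in\mathbb{C}^{p\times n}$, $D\in\mathbb{C}^{p\times m}$, $F\in\mathbb{C}^{\nu\times\nu}$, with $\mathrm{eig}(A)\cap\mathrm{eig}(F)=\emptyset$. The Rosenbrock system matrix is $\mathcal{R}_\Sigma(\lambda)=\begin{bmatrix}A-\lambda I_n & B\\ C & D\end{bmatrix}\in\mathbb{C}^{(n+p)\times(n+m)}$ for $\lambda\in\mathbb{C}$. The steady-state cascade (SSC) operators are defined as follows: for $H\in\mathbb{C}^{m\times\nu}$, $\mathcal{C}_{\rm p}(H)=C\Pi+DH$, where $\Pi\in\mathbb{C}^{n\times\nu}$ is the unique solution of the Sylvester equation $\Pi F - A\Pi = BH$; for $G\in\mathbb{C}^{\nu\times p}$, $\mathcal{C}_{\rm d}(G)=-MB+GD$, where $M\in\mathbb{C}^{\nu\times n}$ is the unique solution of $MA-FM=GC$. $\mathbb{C}_{\geq 0}$ is the set of complex numbers with nonnegative real part. For a matrix $H$ and subspace $\mathcal{V}$, $H\mathcal{V}=\{Hv:v\in\mathcal{V}\}$.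 A pair $(F,H)$ is detectable if every eigenvalue $\lambda$ of $F$ with $\mathrm{Re}\,\lambda\ge0$ is observable, i.e., $Hf\neq 0$ for every nonzero $f$ with $Ff=\lambda f$. *)

(* Defs.v *)
(* The field of complex numbers is modelled by an arbitrary
   numClosedFieldType C (algebraically closed, char 0, with real part 'Re);
   the statement is purely algebraic so this is a (harmless) generalization. *)
From HB Require Import structures.
From mathcomp Require Import all_boot all_order all_algebra.
From mathcomp Require Import boolp classical_sets.
Set Implicit Arguments. Unset Strict Implicit. Unset Printing Implicit Defensive.
Import Order.TTheory GRing.Theory Num.Theory.
Local Open Scope ring_scope.
Local Open Scope classical_set_scope.

Section Defs.
Variable C : numClosedFieldType.
Variables n m p nu : nat.

Definition rosenbrock (A : 'M[C]_n) (B : 'M[C]_(n, m)) (Cm : 'M[C]_(p, n))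
  (D : 'M[C]_(p, m)) (l : C) : 'M[C]_(n + p, n + m) :=
  block_mx (A - l%:M) B Cm D.

(* The (unique, when eig A and eig F are disjoint) solution Pi of
   Pi F - A Pi = X. *)
Definition sylv_p (A : 'M[C]_n) (F : 'M[C]_nu) (X : 'M[C]_(n, nu)) : 'M[C]_(n, nu) :=
  xget 0 [set Pi : 'M[C]_(n, nu) | Pi *m F - A *m Pi = X].

Definition sylv_d (A : 'M[C]_n) (F : 'M[C]_nu) (Y : 'M[C]_(nu, n)) : 'M[C]_(nu, n) :=
  xget 0 [set M : 'M[C]_(nu, n) | M *m A - F *m M = Y].

Definition Cp (A : 'M[C]_n) (B : 'M[C]_(n, m)) (Cm : 'M[C]_(p, n))
  (D : 'M[C]_(p, m)) (F : 'M[C]_nu) (H : 'M[C]_(m, nu)) : 'M[C]_(p, nu) :=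
  Cm *m sylv_p A F (B *m H) + D *m H.

Definition Cd (A : 'M[C]_n) (B : 'M[C]_(n, m)) (Cm : 'M[C]_(p, n))
  (D : 'M[C]_(p, m)) (F : 'M[C]_nu) (G : 'M[C]_(nu, p)) : 'M[C]_(nu, m) :=
  - (sylv_d A F (G *m Cm)) *m B + G *m D.

Definition obs_eig (q : nat) (F : 'M[C]_nu) (H : 'M[C]_(q, nu)) (l : C) : Prop :=
  forall f : 'cV[C]_nu, f != 0 -> F *m f = l *: f -> H *m f != 0.

(* (F, H) observable: every eigenvalue of F is observable (PBH test) *)
Definition observable (q : nat) (F : 'M[C]_nu) (H : 'M[C]_(q, nu)) : Prop :=
  forall l : C, obs_eig F H l.

Definition detectable (q : nat) (F : 'M[C]_nu) (H : 'M[C]_(q, nu)) : Prop :=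
  forall l : C, 0 <= 'Re l -> obs_eig F H l.

Definition image_ker_full (F : 'M[C]_nu) (H : 'M[C]_(m, nu)) (l : C) : Prop :=
  forall y : 'cV[C]_m, exists f : 'cV[C]_nu, (l%:M - F) *m f = 0 /\ H *m f = y.

End Defs.

(* Main.v *)
Require Import Defs.
From HB Require Import structures.
From mathcomp Require Import all_boot all_order all_algebra.
From mathcomp Require Import boolp classical_sets.
Import Order.TTheory GRing.Theory Num.Theory.
Local Open Scope ring_scope.

Module Aux.
Set Implicit Arguments. Unset Strict Implicit. Unset Printing Implicit Defensive.

Section Gen.
Variable K : fieldType.

Lemma noeig_free n (A : 'M[K]_n) l : ~ eigenvalue A l -> row_free (A - l%:M).
Proof.
move=> h; rewrite -kermx_eq0; apply/negPn/negP => hk; apply: h; exact: hk.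
Qed.

Lemma noeig_rinj n (A : 'M[K]_n) l k (X : 'M_(k, n)) :
  ~ eigenvalue A l -> X *m (A - l%:M) = 0 -> X = 0.
Proof. by move=> /noeig_free h /eqP; rewrite mulmx_free_eq0 // => /eqP. Qed.

Lemma noeig_linj n (A : 'M[K]_n) l k (X : 'M_(n, k)) :
  ~ eigenvalue A l -> (A - l%:M) *m X = 0 -> X = 0.
Proof.
move=> /noeig_free; rewrite row_free_unit => hu hX.
by rewrite -(mulKmx hu X) hX mulmx0.
Qed.

Lemma eig_tr n (A : 'M[K]_n) l : eigenvalue A^T l <-> eigenvalue A l.
Proof.
have e : forall B : 'M[K]_n, eigenvalue B l = ~~ row_free (B - l%:M).
  by move=> B; rewrite -kermx_eq0.
rewrite !e /row_free -[in X in X <-> _]tr_scalar_mx -linearB /= mxrank_tr.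
by [].
Qed.

Lemma col_eig n (F : 'M[K]_n) l (f : 'cV_n) :
  f != 0 -> F *m f = l *: f -> eigenvalue F l.
Proof.
move=> fnz Ff; case: (boolP (eigenvalue F l)) => // /negP h.
have := @noeig_linj n F l 1 f h.
rewrite mulmxBl Ff mul_scalar_mx subrr => /(_ erefl) /eqP.
by rewrite (negbTE fnz).
Qed.

Lemma fr_inj a b (R : 'M[K]_(a, b)) k (Z : 'M_(b, k)) :
  \rank R = b -> R *m Z = 0 -> Z = 0.
Proof.
move=> hr hZ; have hf : row_free R^T by rewrite /row_free mxrank_tr hr.
apply: trmx_inj; apply/eqP; rewrite linear0 -(mulmx_free_eq0 _ hf) -trmx_mul hZ.
by rewrite linear0.
Qed.

Lemma fr_not a b (R : 'M[K]_(a, b)) :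
  \rank R <> b -> exists2 z : 'cV_b, R *m z = 0 & z != 0.
Proof.
move=> hr; have : kermx R^T != 0.
  by rewrite kermx_eq0 /row_free mxrank_tr; apply/eqP.
case/rowV0Pn => v /sub_kermxP hv vnz; exists v^T.
  by apply: trmx_inj; rewrite trmx_mul trmxK hv linear0.
by apply: contra vnz => /eqP h; rewrite -[v]trmxK h linear0.
Qed.

End Gen.


Section CH.
Variable K : closedFieldType.

Lemma CH_roots nu (F : 'M[K]_nu) :
  exists rs : seq K, (forall r, r \in rs -> eigenvalue F r) /\
    \prod_(r <- rs) (F - r%:M) = 0.
Proof.
case: nu F => [|nu] F.
  by exists [::]; split => //; rewrite big_nil; apply/matrixP => [[]].
have [rs hrs] := closed_field_poly_normal (char_poly F).
move: hrs; rewrite (monicP (char_poly_monic F)) scale1r => hrs.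
exists rs; split.
  by move=> r hr; rewrite eigenvalue_root_char hrs root_prod_XsubC.
have := Cayley_Hamilton F; rewrite hrs rmorph_prod /= => <-.
by apply: eq_bigr => r _; rewrite rmorphB /= horner_mx_X horner_mx_C.
Qed.

Lemma sylv0 n nu (A : 'M[K]_n) (F : 'M[K]_nu) (Pi : 'M_(n, nu)) :
  (forall l, eigenvalue F l -> ~ eigenvalue A l) ->
  Pi *m F = A *m Pi -> Pi = 0.
Proof.
move=> hAF hP; have [rs [hrs hprod]] := CH_roots F.
have : Pi *m \prod_(r <- rs) (F - r%:M) = 0 by rewrite hprod mulmx0.
elim: rs hrs {hprod} => [|r rs IH] hrs.
  by rewrite big_nil -idmxE mulmx1.
rewrite big_cons -mulmxE mulmxA.
have -> : Pi *m (F - r%:M) = (A - r%:M) *m Pi.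
  by rewrite mulmxBr mulmxBl hP scalar_mxC.
rewrite -mulmxA => /(noeig_linj (hAF _ (hrs _ (mem_head _ _)))).
by apply: IH => s hs; apply: hrs; rewrite in_cons hs orbT.
Qed.

Lemma sylv0d n nu (A : 'M[K]_n) (F : 'M[K]_nu) (M : 'M_(nu, n)) :
  (forall l, eigenvalue F l -> ~ eigenvalue A l) ->
  M *m A = F *m M -> M = 0.
Proof.
move=> hAF hM; apply: trmx_inj; rewrite linear0.
apply: (@sylv0 _ _ A^T F^T).
  by move=> l /eig_tr /hAF h /eig_tr.
by rewrite -!trmx_mul hM.
Qed.

End CH.


Section Lin.
Variable K : fieldType.

Lemma inj_surj a b (f : {linear 'M[K]_(a, b) -> 'M[K]_(a, b)}) :
  (forall X, f X = 0 -> X = 0) -> forall Y, exists X, f X = Y.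
Proof.
move=> hf Y.
have hfree : row_free (lin_mx f).
  apply: inj_row_free => v hv; rewrite -[v]vec_mxK; apply/eqP.
  rewrite mxvec_eq0; apply/eqP; apply: hf.
  by rewrite -mx_rV_lin hv linear0.
move: hfree; rewrite row_free_unit => hu.
exists (vec_mx (mxvec Y *m invmx (lin_mx f))).
by rewrite -mx_rV_lin mulmxKV // mxvecK.
Qed.

Definition Smap a b (P : 'M[K]_b) (Q : 'M[K]_a) (X : 'M[K]_(a, b)) :=
  X *m P - Q *m X.

Fact Smap_lin a b P Q : linear (@Smap a b P Q).
Proof.
move=> c x y; rewrite /Smap mulmxDl mulmxDr -scalemxAl -scalemxAr.
by rewrite scalerBr opprD addrACA.
Qed.

HB.instance Definition _ a b P Q :=
  GRing.isLinear.Build K 'M[K]_(a, b) 'M[K]_(a, b) _ (@Smap a b P Q) (@Smap_lin a b P Q).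

Lemma tr_delta a b (i : 'I_a) (j : 'I_b) (Z : 'M[K]_(a, b)) :
  \tr (delta_mx j i *m Z) = Z i j.
Proof.
rewrite /mxtrace (bigD1 j) //= big1 ?addr0 => [|r hr].
  rewrite mxE (bigD1 i) //= big1 ?addr0 => [|s hs].
    by rewrite mxE !eqxx mul1r.
  by rewrite mxE (negbTE hs) andbF mul0r.
rewrite mxE big1 // => s _; rewrite mxE (negbTE hr) /= mul0r //.
Qed.

Lemma trace0_eq0 a b (Z : 'M[K]_(a, b)) :
  (forall W : 'M_(b, a), \tr (W *m Z) = 0) -> Z = 0.
Proof.
by move=> h; apply/matrixP => i j; rewrite mxE -tr_delta h.
Qed.

Lemma mxvec_dot a b (X Y : 'M[K]_(a, b)) :
  mxvec X *m (mxvec Y)^T = (\tr (X *m Y^T))%:M.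
Proof.
apply/matrixP => i j; rewrite !ord1 !mxE /=.
rewrite (reindex _ (curry_mxvec_bij _ _)) /= mulr1n /mxtrace.
under [RHS]eq_bigr => i0 _ do rewrite mxE.
rewrite pair_bigA; apply: eq_bigr => [[i0 j0]] _ /=.
by rewrite !mxE !mxvecE.
Qed.

Section Dual.
Variables (k l nu : nat) (E N : 'M[K]_(l, k)) (F : 'M[K]_nu).

Definition Tmap (Z : 'M[K]_(k, nu)) : 'M[K]_(l, nu) := E *m Z *m F - N *m Z.
Definition Umap (W : 'M[K]_(nu, l)) : 'M[K]_(nu, k) := F *m W *m E - W *m N.

Fact Tmap_lin : linear Tmap.
Proof.
move=> c x y; rewrite /Tmap !mulmxDr mulmxDl -!scalemxAr -scalemxAl.
by rewrite scalerBr opprD addrACA.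
Qed.

HB.instance Definition _ :=
  GRing.isLinear.Build K 'M[K]_(k, nu) 'M[K]_(l, nu) _ Tmap Tmap_lin.

Fact Umap_lin : linear Umap.
Proof.
move=> c x y; rewrite /Umap mulmxDr !mulmxDl -scalemxAr -!scalemxAl.
by rewrite scalerBr opprD addrACA.
Qed.

HB.instance Definition _ :=
  GRing.isLinear.Build K 'M[K]_(nu, l) 'M[K]_(nu, k) _ Umap Umap_lin.

Lemma Utr W Z : \tr (Umap W *m Z) = \tr (W *m Tmap Z).
Proof.
rewrite /Umap /Tmap mulmxBl mulmxBr !linearB /=; congr (_ - _); last first.
  by rewrite mulmxA.
by rewrite -!mulmxA mxtrace_mulC !mulmxA.
Qed.

Lemma dual_equiv :
  (forall Z, Tmap Z = 0 -> Z = 0) <-> (forall Y, exists W, Umap W = Y).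
Proof.
split => [hT Y | hU Z hZ]; last first.
  apply/matrixP => i j; rewrite mxE.
  have [W hW] := hU (delta_mx j i).
  by rewrite -tr_delta -hW Utr hZ mulmx0 linear0.
have hfull : row_full (lin_mx Umap).
  apply/negPn/negP => hnf.
  have : kermx (lin_mx Umap)^T != 0.
    rewrite kermx_eq0 /row_free mxrank_tr; exact: hnf.
  case/rowV0Pn => v /sub_kermxP hv vnz.
  have hZ : Tmap (vec_mx v)^T = 0.
    apply: trace0_eq0 => W.
    have := congr1 (fun M => M^T) hv; rewrite trmx_mul trmxK linear0 => hv'.
    have := congr1 (fun M => mxvec W *m M) hv'.
    rewrite mulmxA mul_vec_lin mulmx0 -[v in v^T]vec_mxK mxvec_dot => h.
    move/matrixP: h => /(_ ord0 ord0); rewrite !mxE /= mulr1n => <-.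
    by rewrite Utr.
  have := hT _ hZ => /(congr1 (fun M => M^T)); rewrite trmxK linear0 => h.
  by move: vnz; rewrite -[v]vec_mxK h linear0 eqxx.
have [B hB] := row_fullP hfull.
exists (vec_mx (mxvec Y *m B)).
by apply: (can_inj mxvecK); rewrite -mul_vec_lin vec_mxK -mulmxA hB mulmx1.
Qed.

End Dual.
End Lin.


Lemma zm1 (V : zmodType) (x P y : V) : y = x + P -> y - x = P.
Proof. by move=> ->; rewrite addrAC subrr add0r. Qed.

Lemma zm2 (V : zmodType) (y Q : V) : 0 = y + Q -> - y = Q.
Proof. by move=> h; apply/eqP; rewrite eq_sym -addr_eq0 addrC -h. Qed.

Section Z. Variable V : zmodType. Implicit Types x y z a b c r P Q : V.
Lemma zm3 x z y : x - (x + z - y - z) = y.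
Proof. by rewrite addrAC addrK opprB addrC addrNK. Qed.
Lemma zm4 a b r : 0 = - a + b - r -> - (a - b) = r.
Proof. by move/eqP; rewrite eq_sym subr_eq0 => /eqP <-; rewrite opprB addrC. Qed.
Lemma zm5 x y z P : x - (y + z) = - P -> y = x - z + P.
Proof. by move=> h; rewrite -[P]opprK -h opprB addrC -addrA addKr addrK. Qed.
Lemma zm6 a b Q : - (a + b) = - Q -> 0 = - a - b + Q.
Proof. by move/oppr_inj <-; rewrite -opprD addNr. Qed.
Lemma zm7 x y z : x - (y + z) = 0 -> y - x = - z.
Proof. by move/eqP; rewrite subr_eq0 => /eqP ->; rewrite opprD addrA addrN add0r. Qed.
Lemma zm8 x y z P : y - x = - P + z -> x - (y - z) = P.
Proof. move=> h; have h2 : - P = y - x - z by rewrite h addrK.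
by rewrite -[P]opprK h2 !opprB addrCA. Qed.
Lemma zm9 a b c Y : - b + c = Y + a -> - (a + b - c) = Y.
Proof. by move=> h; rewrite !opprD opprK -addrA h addrC addrK. Qed.
End Z.

Section Main.
Variables (K : numClosedFieldType) (n m p nu : nat).
Variables (A : 'M[K]_n) (B : 'M[K]_(n, m)) (Cm : 'M[K]_(p, n)) (D : 'M[K]_(p, m)).
Variable (F : 'M[K]_nu).
Hypothesis hAF : forall l : K, ~ (eigenvalue A l /\ eigenvalue F l).

Lemma hFA l : eigenvalue F l -> ~ eigenvalue A l.
Proof. by move=> hF hA; apply: (hAF (conj hA hF)). Qed.

Definition E0 : 'M[K]_(n + p, n + m) := block_mx 1%:M 0 0 0.
Definition N0 : 'M[K]_(n + p, n + m) := block_mx A B Cm D.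
Local Notation T := (Tmap E0 N0 F).
Local Notation U := (Umap E0 N0 F).

Lemma rosE l : rosenbrock A B Cm D l = N0 - l *: E0.
Proof.
rewrite /rosenbrock /N0 /E0 scale_block_mx opp_block_mx add_block_mx.
by rewrite scalemx1 !scaler0 !oppr0 !addr0.
Qed.

Lemma Tcol Pi Psi : T (col_mx Pi Psi) =
  col_mx (Pi *m F - (A *m Pi + B *m Psi)) (- (Cm *m Pi + D *m Psi)).
Proof.
rewrite /Tmap /E0 /N0 !mul_block_col !mul0mx !mul1mx !addr0 mul_col_mx mul0mx.
by rewrite opp_col_mx add_col_mx add0r.
Qed.

Lemma Urow M G : U (row_mx M G) =
  row_mx (F *m M - (M *m A + G *m Cm)) (- (M *m B + G *m D)).
Proof.
rewrite /Umap /E0 /N0 !mul_row_block mul_mx_row mul_row_block.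
by rewrite !mulmx0 !mulmx1 !addr0 opp_row_mx add_row_mx add0r.
Qed.

Lemma Tclos (Z : 'M_(n + m, nu)) (X : 'M_nu) :
  X *m F = F *m X -> T (Z *m X) = T Z *m X.
Proof.
by move=> hX; rewrite /Tmap mulmxBl !mulmxA -(mulmxA _ X F) hX !mulmxA.
Qed.

Lemma Teig (Z : 'M_(n + m, nu)) r :
  Z *m F = r *: Z -> T Z = - (rosenbrock A B Cm D r *m Z).
Proof.
move=> hZ; rewrite /Tmap rosE -mulmxA hZ mulmxBl opprB -scalemxAr scalemxAl.
by [].
Qed.

Lemma sylv_pP X : Smap F A (sylv_p A F X) = X.
Proof.
rewrite /sylv_p; set P := (X in xget _ X).
have : P (xget 0 P).
  apply: xgetPex.
  have hi : forall Z, Smap F A Z = 0 -> Z = 0.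
    by move=> Z hZ; apply: (sylv0 hFA); apply/eqP; rewrite -subr_eq0; apply/eqP.
  have [Pi hPi] := inj_surj hi X.
  by exists Pi.
by [].
Qed.

Lemma sylv_p_uniq X Pi : Smap F A Pi = X -> sylv_p A F X = Pi.
Proof.
move=> h; apply/eqP; rewrite -subr_eq0; apply/eqP; apply: (sylv0 hFA).
apply/eqP; rewrite -subr_eq0; apply/eqP.
change (Smap F A (sylv_p A F X - Pi) = 0).
by rewrite linearB /= sylv_pP h subrr.
Qed.

Lemma sylv_dP Y : Smap A F (sylv_d A F Y) = Y.
Proof.
rewrite /sylv_d; set P := (X in xget _ X).
have : P (xget 0 P).
  apply: xgetPex.
  have hi : forall Z, Smap A F Z = 0 -> Z = 0.
    by move=> Z hZ; apply: (sylv0d hFA); apply/eqP; rewrite -subr_eq0; apply/eqP.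
  have [M hM] := inj_surj hi Y.
  by exists M.
by [].
Qed.


Lemma sylv_d_uniq Y M : Smap A F M = Y -> sylv_d A F Y = M.
Proof.
move=> h; apply/eqP; rewrite -subr_eq0; apply/eqP; apply: (sylv0d hFA).
apply/eqP; rewrite -subr_eq0; apply/eqP.
change (Smap A F (sylv_d A F Y - M) = 0).
by rewrite linearB /= sylv_dP h subrr.
Qed.

Definition Tinj := forall Z, T Z = 0 -> Z = 0.
Definition Usurj := forall Y, exists W, U W = Y.

Lemma L1 : (forall l : K, eigenvalue F l ->
             \rank (rosenbrock A B Cm D l) = (n + m)%N) <-> Tinj.
Proof.
split=> [hi Z hZ | hT l hl].
  case: (eqVneq Z 0) => // Znz; exfalso.
  have [rs [hrs hprod]] := CH_roots F.
  have : Z *m \prod_(r <- rs) (F - r%:M) = 0 by rewrite hprod mulmx0.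
  elim: rs hrs {hprod} Z hZ Znz => [|r rs IH] hrs Z hZ Znz.
    by rewrite big_nil -idmxE mulmx1 => /eqP; rewrite (negbTE Znz).
  rewrite big_cons -mulmxE mulmxA.
  have hr := hrs r (mem_head _ _).
  case: (eqVneq (Z *m (F - r%:M)) 0) => h1 hp.
    have hZF : Z *m F = r *: Z.
      by move/eqP: h1; rewrite mulmxBr subr_eq0 mul_mx_scalar => /eqP.
    move: (Teig hZF); rewrite hZ => /esym /eqP; rewrite oppr_eq0 => /eqP hR.
    by move: Znz; rewrite (fr_inj (hi r hr) hR) eqxx.
  apply: (IH _ _ _ h1 hp) => [s hs|].
    by apply: hrs; rewrite in_cons hs orbT.
  rewrite Tclos ?hZ ?mul0mx //.
  by rewrite mulmxBl mulmxBr scalar_mxC.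
case: (eqVneq (\rank (rosenbrock A B Cm D l)) (n + m)%N) => [//|/eqP hne].
have [z hz znz] := fr_not hne.
have [g hg gnz] := eigenvalueP hl.
have hZF : (z *m g) *m F = l *: (z *m g) by rewrite -mulmxA hg scalemxAr.
have := Teig hZF; rewrite mulmxA hz mul0mx oppr0 => /hT /eqP.
rewrite mulmx_free_eq0 ?(negbTE znz) //.
by rewrite /row_free rank_rV gnz.
Qed.

Lemma L2 :
    (forall (P : 'M[K]_(n, nu)) (Q : 'M[K]_(p, nu))
            (Pi1 Pi2 : 'M[K]_(n, nu)) (Psi1 Psi2 : 'M[K]_(m, nu)),
        Pi1 *m F = A *m Pi1 + B *m Psi1 + P -> 0 = Cm *m Pi1 + D *m Psi1 + Q ->
        Pi2 *m F = A *m Pi2 + B *m Psi2 + P -> 0 = Cm *m Pi2 + D *m Psi2 + Q ->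
        Pi1 = Pi2 /\ Psi1 = Psi2) <-> Tinj.
Proof.
split => [hii Z | hT P Q Pi1 Pi2 Psi1 Psi2 h1 h2 h3 h4].
  rewrite -[Z]vsubmxK Tcol -col_mx0 => /eq_col_mx [e1 e2].
  have [-> ->] : usubmx Z = 0 /\ dsubmx Z = 0; last by rewrite col_mx0.
  apply: (hii 0 0 _ 0 _ 0).
  - by rewrite addr0; apply/eqP; rewrite -subr_eq0 e1.
  - by rewrite addr0; apply/esym/eqP; rewrite -oppr_eq0 e2.
  - by rewrite mul0mx !mulmx0 !addr0.
  - by rewrite !mulmx0 !addr0.
have e : T (col_mx Pi1 Psi1 - col_mx Pi2 Psi2) = 0.
  by rewrite linearB /= !Tcol (zm1 h1) (zm1 h3) (zm2 h2) (zm2 h4) subrr.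
by move/hT/eqP: e; rewrite subr_eq0 => /eqP /eq_col_mx.
Qed.

Lemma L3 : injective (Cp A B Cm D F) <-> Tinj.
Proof.
split => [hinj Z | hT H1 H2 hC].
  rewrite -[Z]vsubmxK Tcol -col_mx0 => /eq_col_mx [e1 e2].
  set Pi := usubmx Z in e1 e2 *; set Psi := dsubmx Z in e1 e2 *.
  have hS : Smap F A Pi = B *m Psi.
    by apply/eqP; rewrite -subr_eq0 /Smap -addrA -opprD e1.
  have hPsi : Psi = 0.
    apply: hinj; rewrite /Cp (sylv_p_uniq hS).
    have -> : sylv_p A F (B *m 0) = 0.
      by apply: sylv_p_uniq; rewrite linear0 mulmx0.
    by rewrite !mulmx0 addr0; apply/eqP; rewrite -oppr_eq0 e2.
  have hPi : Pi = 0.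
    apply: (sylv0 hFA); apply/eqP; rewrite -subr_eq0; apply/eqP.
    by change (Smap F A Pi = 0); rewrite hS hPsi mulmx0.
  by rewrite hPi hPsi col_mx0.
have TS : forall H, T (col_mx (sylv_p A F (B *m H)) H) =
                    col_mx 0 (- Cp A B Cm D F H).
  move=> H; rewrite Tcol /Cp; congr col_mx.
  by have := sylv_pP (B *m H); rewrite /Smap => h; rewrite opprD addrA h subrr.
have e : T (col_mx (sylv_p A F (B *m H1)) H1 -
            col_mx (sylv_p A F (B *m H2)) H2) = 0.
  by rewrite linearB /= !TS hC subrr.
by move/hT/eqP: e; rewrite subr_eq0 => /eqP /eq_col_mx [_ ->].
Qed.

Lemma L4 :
    (forall (Pb : 'M[K]_(nu, n)) (Qb : 'M[K]_(nu, m)),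
        exists (M : 'M[K]_(nu, n)) (G : 'M[K]_(nu, p)),
          M *m A = F *m M + G *m Cm + Pb /\ 0 = - M *m B + G *m D + Qb)
    <-> Usurj.
Proof.
split => [hiii Y | hU Pb Qb].
  have [M [G [e1 e2]]] := hiii (- lsubmx Y) (- rsubmx Y).
  exists (row_mx M (- G)); rewrite Urow -[Y]hsubmxK; congr row_mx.
    by rewrite e1 mulNmx zm3.
  by rewrite mulNmx; apply: zm4; rewrite e2 mulNmx.
have [W hW] := hU (row_mx (- Pb) (- Qb)).
move: hW; rewrite -[W]hsubmxK Urow => /eq_row_mx [e1 e2].
exists (lsubmx W), (- rsubmx W); split.
  by rewrite mulNmx; apply: zm5.
by rewrite !mulNmx; apply: zm6.
Qed.

Lemma L5 :
    (forall Y : 'M[K]_(nu, m), exists G : 'M[K]_(nu, p), Cd A B Cm D F G = Y)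
    <-> Usurj.
Proof.
split => [hv Y | hU Y].
  set M0 := sylv_d A F (- lsubmx Y).
  have [G hG] := hv (rsubmx Y + M0 *m B).
  set M1 := sylv_d A F (G *m Cm).
  exists (row_mx (M0 + M1) (- G)); rewrite Urow -[Y]hsubmxK; congr row_mx.
    rewrite mulNmx; apply: zm8.
    by have := linearD (Smap A F) M0 M1; rewrite /= !sylv_dP.
  rewrite mulNmx mulmxDl; apply: zm9.
  by move: hG; rewrite /Cd mulNmx.
have [W hW] := hU (row_mx 0 Y).
move: hW; rewrite -[W]hsubmxK Urow => /eq_row_mx [e1 e2].
exists (- rsubmx W); rewrite /Cd.
rewrite (@sylv_d_uniq _ (lsubmx W)); last first.
  by rewrite /Smap mulNmx; apply: zm7.
by rewrite !mulNmx -opprD.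
Qed.

Lemma Cpf H (f : 'cV[K]_nu) : Cp A B Cm D F H *m f =
  Cm *m (sylv_p A F (B *m H) *m f) + D *m (H *m f).
Proof. by rewrite /Cp mulmxDl !mulmxA. Qed.

Lemma keyA H (f : 'cV[K]_nu) l : F *m f = l *: f ->
  (A - l%:M) *m (sylv_p A F (B *m H) *m f) + B *m (H *m f) = 0.
Proof.
move=> Ff; have := sylv_pP (B *m H); rewrite /Smap => h.
set S := sylv_p A F (B *m H) in h *.
rewrite [B *m (H *m f)]mulmxA -h mulmxBl mulmxBl -!mulmxA Ff -scalemxAr.
by rewrite mul_scalar_mx addrC addrA addrNK subrr.
Qed.

Lemma fwd l H : obs_eig F H l ->
  (eigenvalue F l -> \rank (rosenbrock A B Cm D l) = (n + m)%N) ->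
  obs_eig F (Cp A B Cm D F H) l.
Proof.
move=> hob hfr f fnz Ff; apply/negP => /eqP hC.
have hl := col_eig fnz Ff.
have hz : rosenbrock A B Cm D l *m
            col_mx (sylv_p A F (B *m H) *m f) (H *m f) = 0.
  by rewrite /rosenbrock mul_block_col keyA // -Cpf hC col_mx0.
move/(fr_inj (hfr hl))/eqP: hz; rewrite col_mx_eq0 => /andP [_ hH].
by move: (hob f fnz Ff); rewrite hH.
Qed.

Lemma conv l H : (eigenvalue F l -> image_ker_full F H l) ->
  obs_eig F (Cp A B Cm D F H) l ->
  obs_eig F H l /\
  (eigenvalue F l -> \rank (rosenbrock A B Cm D l) = (n + m)%N).
Proof.
move=> himg hob; split.
  move=> f fnz Ff; apply/negP => /eqP hH.
  have hl := col_eig fnz Ff.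
  have hS : sylv_p A F (B *m H) *m f = 0.
    apply: (noeig_linj (hFA hl)).
    by have := keyA H Ff; rewrite hH mulmx0 addr0.
  by move: (hob f fnz Ff); rewrite Cpf hS hH !mulmx0 addr0 eqxx.
move=> hl; case: (eqVneq (\rank (rosenbrock A B Cm D l)) (n + m)%N) => [//|/eqP hne].
have [z hz znz] := fr_not hne.
move: hz znz; rewrite -[z]vsubmxK; set x := usubmx z; set u := dsubmx z.
rewrite /rosenbrock mul_block_col -col_mx0 => /eq_col_mx [e1 e2] znz.
have unz : u != 0.
  apply: contra znz => /eqP hu; move: e1; rewrite hu mulmx0 addr0.
  by move/(noeig_linj (hFA hl)) => ->; rewrite col_mx0.
have [f [hf1 hf2]] := himg hl u.
have Ff : F *m f = l *: f.
  by move/eqP: hf1; rewrite mulmxBl mul_scalar_mx subr_eq0 => /eqP.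
have fnz : f != 0 by apply: contra unz => /eqP hf; rewrite -hf2 hf mulmx0.
have hk := keyA H Ff; rewrite hf2 in hk.
have hSx : sylv_p A F (B *m H) *m f = x.
  apply/eqP; rewrite -subr_eq0; apply/eqP; apply: (noeig_linj (hFA hl)).
  rewrite mulmxBr; apply/eqP; rewrite subr_eq0; apply/eqP.
  by apply: (addIr (B *m u)); rewrite hk e1.
by move: (hob f fnz Ff); rewrite Cpf hSx hf2 e2 eqxx.
Qed.

End Main.

End Aux.

Theorem theorem2 (C : numClosedFieldType) (n m p nu : nat)
  (A : 'M[C]_n) (B : 'M[C]_(n, m)) (Cm : 'M[C]_(p, n)) (D : 'M[C]_(p, m))
  (F : 'M[C]_nu)
  (hAF : forall l : C, ~ (eigenvalue A l /\ eigenvalue F l)) :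
  [<->
    (* (i) *)
    (forall l : C, eigenvalue F l -> \rank (rosenbrock A B Cm D l) = (n + m)%N);
    (* (ii) *)
    (forall (P : 'M[C]_(n, nu)) (Q : 'M[C]_(p, nu))
            (Pi1 Pi2 : 'M[C]_(n, nu)) (Psi1 Psi2 : 'M[C]_(m, nu)),
        Pi1 *m F = A *m Pi1 + B *m Psi1 + P -> 0 = Cm *m Pi1 + D *m Psi1 + Q ->
        Pi2 *m F = A *m Pi2 + B *m Psi2 + P -> 0 = Cm *m Pi2 + D *m Psi2 + Q ->
        Pi1 = Pi2 /\ Psi1 = Psi2);
    (* (iii) *)
    (forall (Pb : 'M[C]_(nu, n)) (Qb : 'M[C]_(nu, m)),
        exists (M : 'M[C]_(nu, n)) (G : 'M[C]_(nu, p)),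
          M *m A = F *m M + G *m Cm + Pb /\ 0 = - M *m B + G *m D + Qb);
    (* (iv) *)
    injective (Cp A B Cm D F);
    (* (v) *)
    (forall Y : 'M[C]_(nu, m), exists G : 'M[C]_(nu, p), Cd A B Cm D F G = Y)
  ]
  /\
  (forall H : 'M[C]_(m, nu),
    (* (a) *)
    (observable F H ->
       (forall l : C, eigenvalue F l -> \rank (rosenbrock A B Cm D l) = (n + m)%N) ->
       observable F (Cp A B Cm D F H))
    /\
    (* (b) *)
    (detectable F H ->
       (forall l : C, eigenvalue F l -> 0 <= 'Re l ->
          \rank (rosenbrock A B Cm D l) = (n + m)%N) ->
       detectable F (Cp A B Cm D F H))
    /\
    (* converse of (a) *)
    ((forall l : C, eigenvalue F l -> image_ker_full F H l) ->
       observable F (Cp A B Cm D F H) ->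
       observable F H /\
       (forall l : C, eigenvalue F l -> \rank (rosenbrock A B Cm D l) = (n + m)%N))
    /\
    (* converse of (b) *)
    ((forall l : C, eigenvalue F l -> 0 <= 'Re l -> image_ker_full F H l) ->
       detectable F (Cp A B Cm D F H) ->
       detectable F H /\
       (forall l : C, eigenvalue F l -> 0 <= 'Re l ->
          \rank (rosenbrock A B Cm D l) = (n + m)%N))).
Proof.
have L1 := Aux.L1 A B Cm D F; have L2 := Aux.L2 A B Cm D F.
have L3 := Aux.L3 B Cm D hAF; have L4 := Aux.L4 A B Cm D F.
have L5 := Aux.L5 B Cm D hAF.
split.
  tfae.
  - move=> h; apply: (proj2 L2); exact: (proj1 L1).
  - move=> h; apply: (proj2 L4); apply: (proj1 (Aux.dual_equiv _ _ _)).
    exact: (proj1 L2).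
  - move=> h; apply: (proj2 L3); apply: (proj2 (Aux.dual_equiv _ _ _)).
    exact: (proj1 L4).
  - move=> h; apply: (proj2 L5); apply: (proj1 (Aux.dual_equiv _ _ _)).
    exact: (proj1 L3).
  - move=> h; apply: (proj2 L1); apply: (proj2 (Aux.dual_equiv _ _ _)).
    exact: (proj1 L5).
move=> H; split; [|split; [|split]].
- move=> hob hfr l; apply: (Aux.fwd hAF) => // hl; exact: hfr.
- move=> hdet hfr l hRe; apply: (Aux.fwd hAF); first exact: hdet.
  by move=> hl; exact: hfr hl hRe.
- move=> himg hob; split => [l | l hl].
    exact: (Aux.conv hAF (himg l) (hob l)).1.
  exact: (Aux.conv hAF (himg l) (hob l)).2 hl.
- move=> himg hdet; split => [l hRe | l hl hRe].
    exact: (Aux.conv hAF (fun hl => himg l hl hRe) (hdet l hRe)).1.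
  exact: (Aux.conv hAF (fun hl => himg l hl hRe) (hdet l hRe)).2 hl.
Qed.
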